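(* For every $\delta > 0$ there exist win-lose bimatrix games in which no pair of mixed strategies $(\mathbf{p}, \mathbf{q})$ with $|\mathrm{supp}(\mathbf{p})| \le 2$ and $|\mathrm{supp}(\mathbf{q})| \le 2$ is a $(1-\delta)$-well-supported Nash equilibrium.
   Context: A bimatrix game is given by two $m \times n$ payoff matrices $A$ (row player) and $B$ (column player); it is win-lose if all entries lie in $\{0,1\}$. A pair of mixed strategies $(\mathbf{p}, \mathbf{q})$ is an $\epsilon$-well-supported Nash equilibrium if every row $i$ in the support of $\mathbf{p}$ satisfies $\mathbf{e}_i^T A \mathbf{q} \ge \max_\ell \mathbf{e}_\ell^T A \mathbf{q} - \epsilon$, and every column $j$ in the support of $\mathbf{q}$ satisfies $\mathbf{p}^T B \mathbf{e}_j \ge \max_\ell \mathbf{p}^T B \mathbf{e}_\ell - \epsilon$. $\mathrm{supp}$ denotes the set of pure strategies played with positive probability. *)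

(* Defs.v *)
From mathcomp Require Import all_boot all_order all_algebra.
From mathcomp Require Import reals.
Set Implicit Arguments. Unset Strict Implicit. Unset Printing Implicit Defensive.
Import Order.TTheory GRing.Theory Num.Theory.
Local Open Scope ring_scope.

Definition win_lose (R : realType) (m n : nat) (A : 'M[R]_(m, n)) : Prop :=
  forall i j, A i j = 0 \/ A i j = 1.

Definition mixed (R : realType) (k : nat) (p : 'I_k -> R) : Prop :=
  (forall i, 0 <= p i) /\ \sum_(i < k) p i = 1.

Definition supp (R : realType) (k : nat) (p : 'I_k -> R) : {set 'I_k} :=
  [set i | p i != 0].

Definition row_payoff (R : realType) (m n : nat) (A : 'M[R]_(m, n))
  (q : 'I_n -> R) (i : 'I_m) : R := \sum_(j < n) A i j * q j.

Definition col_payoff (R : realType) (m n : nat) (B : 'M[R]_(m, n))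
  (p : 'I_m -> R) (j : 'I_n) : R := \sum_(i < m) p i * B i j.

Definition eps_WSNE (R : realType) (m n : nat) (A B : 'M[R]_(m, n))
  (eps : R) (p : 'I_m -> R) (q : 'I_n -> R) : Prop :=
  mixed p /\ mixed q /\
  (forall i, i \in supp p -> forall l, row_payoff A q i >= row_payoff A q l - eps) /\
  (forall j, j \in supp q -> forall l, col_payoff B p j >= col_payoff B p l - eps).

(* Main.v *)
Require Import Defs.
From mathcomp Require Import all_boot all_order all_algebra.
From mathcomp Require Import reals.
From mathcomp Require Import ring lra zify.
From Stdlib Require Import Lia.
Set Implicit Arguments. Unset Strict Implicit. Unset Printing Implicit Defensive.
Import Order.TTheory GRing.Theory Num.Theory.
Local Open Scope ring_scope.

Definition F := 'Z_67.
Definition allF : seq F := [seq inZp k | k <- iota 0 67].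
Definition QRs : seq F := undup [seq (inZp (x*x)%N : F) | x <- iota 1 66].
Definition qr (x : F) := x \in QRs.
Definition U0 : seq F := [seq u <- allF | qr (-u) && qr (1 - u)].

Lemma chk_cover : all (fun t => let L := [seq a - t*b | a <- U0, b <- U0] in all (fun d => d \in L) allF) QRs.
Proof. vm_compute. reflexivity. Qed.
Lemma chk_M : all (fun x => all (fun y => qr (x*y)) QRs) QRs.
Proof. vm_compute. reflexivity. Qed.
Lemma chk_N : all (fun x => ~~ qr (-x)) QRs.
Proof. vm_compute. reflexivity. Qed.
Lemma chk_inv : all (fun x => has (fun y => x*y == 1) QRs) QRs.
Proof. vm_compute. reflexivity. Qed.
Lemma chk_or : all (fun x => (x == 0) || qr x || qr (-x)) allF.
Proof. vm_compute. reflexivity. Qed.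
Lemma chk_0 : ~~ qr 0. Proof. vm_compute. reflexivity. Qed.
Lemma chk_1 : qr 1. Proof. vm_compute. reflexivity. Qed.

Lemma in_allF (x : F) : x \in allF.
Proof.
apply/mapP; exists (val x); first by rewrite mem_iota /= add0n; case: x.
by apply/val_inj; rewrite /= modn_small //; case: x.
Qed.

Opaque QRs U0 allF.
Lemma qrM x y : qr x -> qr y -> qr (x * y).
Proof. move=> hx hy. have h := allP chk_M x hx. exact: (allP h y hy). Qed.

Lemma qrN x : qr x -> ~~ qr (- x).
Proof. move=> hx. exact: (allP chk_N x hx). Qed.

Lemma qrinv x : qr x -> exists y, qr y /\ x * y = 1.
Proof.
move=> hx; have h := allP chk_inv x hx. have [y hy e] := hasP h.
exists y; split; first exact: hy. exact: (eqP e).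
Qed.

Lemma qr_or x : x != 0 -> qr x \/ qr (- x).
Proof.
move=> hx; have h := allP chk_or x (in_allF x).
move: h; rewrite (negbTE hx) /= => /orP [] h; [left|right]; exact: h.
Qed.

Lemma qr_cover t d : qr t -> exists a b, a \in U0 /\ b \in U0 /\ a - t * b = d.
Proof.
move=> ht. have h1 := allP chk_cover t ht. have h2 := allP h1 d (in_allF d).
have [[a b] [ha hb e]] := allpairsP h2.
exists a, b. split; first exact: ha. split; first exact: hb. by rewrite e.
Qed.

Definition nn := (67 * 67)%N.
Definition sf (s : F) : F := if qr s then s else 1.
Lemma qr_sf s : qr (sf s).
Proof. rewrite /sf; case: ifP => [h|_]; [exact: h | exact: chk_1]. Qed.
Definition decc (j : 'I_nn) : F := inZp (j %% 67).
Definition decs (j : 'I_nn) : F := sf (inZp (j %/ 67)).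
Definition Aent (i : F) (j : 'I_nn) := has (fun u => i == decc j + decs j * u) U0.
Definition Bent (i : F) (j : 'I_nn) := (i == decc j) || (i == decc j + decs j).

Lemma mkcol_lt (c s : F) : (val c + 67 * val s < nn)%N.
Proof.
case: c => c hc; case: s => s hs.
have hc' : (c < 67)%N := hc. have hs' : (s < 67)%N := hs.
rewrite /nn /=. nia.
Qed.
Definition mkcol (c s : F) : 'I_nn := Ordinal (mkcol_lt c s).
Lemma decc_mk c s : decc (mkcol c s) = c.
Proof.
have hc : (val c < 67)%N by case: c.
apply/val_inj; rewrite /= addnC mulnC modnMDl.
by rewrite !modn_small.
Qed.
Lemma decs_mk c s : decs (mkcol c s) = sf s.
Proof.
have hc : (val c < 67)%N by case: c.
have hs : (val s < 67)%N by case: s.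
rewrite /decs; congr sf; apply/val_inj => /=.
rewrite addnC mulnC divnMDl // divn_small // addn0.
by rewrite modn_small.
Qed.

Lemma key_id (K : comRingType) (c1 c2 s1 s2 a b y : K) :
  c1 + s1 * a - (c2 + s2 * b) =
  s1 * (a - y * s2 * b - y * (c2 - c1)) + (s1 * y - 1) * (s2 * b + (c2 - c1)).
Proof. ring. Qed.
Lemma id2 (K : comRingType) (c s u : K) : c - (c + s * u) = s * (- u).
Proof. ring. Qed.
Lemma id3 (K : comRingType) (c s u : K) : c + s - (c + s * u) = s * (1 - u).
Proof. ring. Qed.

Lemma coverA (j1 j2 : 'I_nn) : exists l : F, Aent l j1 /\ Aent l j2.
Proof.
set c1 := decc j1; set c2 := decc j2; set s1 := decs j1; set s2 := decs j2.
have [y [qy hy]] := qrinv (qr_sf (inZp (j1 %/ 67))).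
have qt : qr (y * s2) := qrM qy (qr_sf _).
have [a [b [ha [hb E]]]] := qr_cover (y * (c2 - c1)) qt.
exists (c1 + s1 * a); split; apply/hasP.
  exists a; first exact: ha. exact: eqxx.
exists b; first exact: hb; rewrite -subr_eq0.
rewrite (key_id _ _ _ _ _ _ y) E hy !subrr mulr0 mul0r addr0. exact: eqxx.
Qed.

Lemma coverB (i1 i2 : F) : exists j, Bent i1 j /\ Bent i2 j.
Proof.
have [<-|ne] := eqVneq i1 i2.
  by exists (mkcol i1 1); rewrite /Bent decc_mk eqxx.
have nz : i2 - i1 != 0 by rewrite subr_eq0 eq_sym.
case: (qr_or nz) => h.
  exists (mkcol i1 (i2 - i1)); rewrite /Bent decc_mk decs_mk /sf h.
  split; first by rewrite eqxx.
  by apply/orP; right; rewrite addrC subrK eqxx.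
exists (mkcol i2 (- (i2 - i1))); rewrite /Bent decc_mk decs_mk /sf h.
split; last by rewrite eqxx.
by apply/orP; right; rewrite opprB addrC subrK eqxx.
Qed.

Lemma Krel (i i' : F) j : Aent i j -> Bent i' j -> qr (i' - i).
Proof.
case/hasP => u; rewrite mem_filter => /andP [/andP [h1 h2] _] /eqP ->.
have qs : qr (decs j) by exact: qr_sf.
case/orP => /eqP ->.
  rewrite id2. exact: qrM qs h1.
rewrite id3. exact: qrM qs h2.
Qed.

Lemma two_elems (X : finType) (T : {set X}) : (#|T| <= 2)%N ->
  forall a, a \in T -> exists b, forall x, x \in T -> x = a \/ x = b.
Proof.
move=> hT a aT.
have hc : (#|T :\ a| <= 1)%N.
  by move: hT; rewrite (cardsD1 a T) aT add1n ltnS.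
case: (set_0Vmem (T :\ a)) => [e|[b hb]].
  exists a => x xT; left; have [//|ne] := eqVneq x a.
  have : x \in T :\ a by rewrite !inE ne xT.
  by rewrite e inE.
exists b => x xT; have [->|ne] := eqVneq x a; first by left.
right; have xD : x \in T :\ a by rewrite !inE ne xT.
exact: (card_le1_eqP hc).
Qed.

Section Real.
Variable R : realType.

Lemma supp_nonempty k (p : 'I_k -> R) : mixed p -> exists i, i \in supp p.
Proof.
case=> _ hs; case: (pickP (fun i => i \in supp p)) => [i hi|h]; first by exists i.
have : \sum_(i < k) p i = 0.
  by apply: big1 => i _; move: (h i); rewrite inE => /negbFE /eqP.
by rewrite hs => /eqP; rewrite oner_eq0.
Qed.

Lemma pos_witness k (g : 'I_k -> R) : 0 < \sum_(j < k) g j -> exists j, g j != 0.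
Proof.
move=> h; case: (pickP (fun j => g j != 0)) => [j hj|hn]; first by exists j.
have : \sum_(j < k) g j = 0 by apply: big1 => j _; move: (hn j) => /negbFE /eqP.
by move=> e; move: h; rewrite e ltxx.
Qed.

Lemma sum_covR k (f q : 'I_k -> R) : (forall j, j \in supp q -> f j = 1) ->
  \sum_(j < k) f j * q j = \sum_(j < k) q j.
Proof.
move=> h; apply: eq_bigr => j _.
case: (boolP (j \in supp q)) => [/h -> | ]; first by rewrite mul1r.
by rewrite inE negbK => /eqP ->; rewrite mulr0.
Qed.

Lemma sum_covL k (f q : 'I_k -> R) : (forall j, j \in supp q -> f j = 1) ->
  \sum_(j < k) q j * f j = \sum_(j < k) q j.
Proof.
move=> h; rewrite -(sum_covR h); apply: eq_bigr => j _; exact: mulrC.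
Qed.

End Real.

Definition Amx (R : realType) : 'M[R]_((Zp_trunc 67).+2, nn) :=
  \matrix_(i, j) ((Aent i j : nat)%:R).
Definition Bmx (R : realType) : 'M[R]_((Zp_trunc 67).+2, nn) :=
  \matrix_(i, j) ((Bent i j : nat)%:R).

Theorem theorem2 (R : realType) (delta : R) (hdelta : 0 < delta) :
  exists (m n : nat) (A B : 'M[R]_(m, n)),
    (0 < m)%N /\ (0 < n)%N /\
    win_lose A /\ win_lose B /\
    forall (p : 'I_m -> R) (q : 'I_n -> R),
      mixed p -> mixed q ->
      (#|supp p| <= 2)%N -> (#|supp q| <= 2)%N ->
      ~ eps_WSNE A B (1 - delta) p q.
Proof.
exists (Zp_trunc 67).+2, nn, (Amx R), (Bmx R).
split; first by [].
split; first by [].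
split; first by move=> i j; rewrite mxE; case: (Aent i j); [right|left].
split; first by move=> i j; rewrite mxE; case: (Bent i j); [right|left].
move=> p q mp mq hp hq [_ [_ [Hr Hc]]].
have [j0 j0q] := supp_nonempty mq.
have [j1 hj1] := two_elems hq j0q.
have [l [hl0 hl1]] := coverA j0 j1.
have payl : row_payoff (Amx R) q l = 1.
  rewrite /row_payoff (@sum_covR R _ (fun j => Amx R l j)); first by case: mq.
  by move=> j /hj1 [] -> /=; rewrite mxE ?hl0 ?hl1.
have rowpos : forall i, i \in supp p -> exists j, j \in supp q /\ Aent i j.
  move=> i hi; have := Hr i hi l; rewrite payl => h.
  have pos : 0 < row_payoff (Amx R) q i.
    by apply: (lt_le_trans _ h); rewrite opprB addrCA subrr addr0.
  have [j hj] := pos_witness pos.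
  move: hj; rewrite mulf_eq0 negb_or mxE => /andP [ha hqj].
  exists j; split; first by rewrite inE.
  case E: (Aent i j); first by []. by move: ha; rewrite E mulr0n eqxx.
have [i0 i0p] := supp_nonempty mp.
have [b hb] := two_elems hp i0p.
have [c [hc0 hc1]] := coverB i0 b.
have payc : col_payoff (Bmx R) p c = 1.
  rewrite /col_payoff (@sum_covL R _ (fun i => Bmx R i c)); first by case: mp.
  by move=> i /hb [] -> /=; rewrite mxE ?hc0 ?hc1.
have colpos : forall j, j \in supp q -> exists i, i \in supp p /\ Bent i j.
  move=> j hj; have := Hc j hj c; rewrite payc => h.
  have pos : 0 < col_payoff (Bmx R) p j.
    by apply: (lt_le_trans _ h); rewrite opprB addrCA subrr addr0.
  have [i hi] := pos_witness pos.
  move: hi; rewrite mulf_eq0 negb_or mxE => /andP [hpi hB].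
  exists i; split; first by rewrite inE.
  case E: (Bent i j); first by []. by move: hB; rewrite E mulr0n eqxx.
have step : forall i, i \in supp p -> exists i', i' \in supp p /\ qr (i' - i).
  move=> i hi; have [j [jq hij]] := rowpos i hi.
  have [i' [i'p hi'j]] := colpos j jq.
  by exists i'; split; [exact: i'p | exact: Krel hij hi'j].
have ne : forall x y : F, qr (y - x) -> x <> y.
  by move=> x y h e; move: h; rewrite e subrr => h; move: chk_0; rewrite h.
have [i1 [i1p q01]] := step i0 i0p.
have [i2 [i2p q12]] := step i1 i1p.
case: (hb i1 i1p) => e1; first by apply: (ne i0 i1 q01); rewrite e1.
case: (hb i2 i2p) => e2; last by apply: (ne i1 i2 q12); rewrite e1 e2.
move: q12; rewrite e2 => q12.
have := qrN q12; rewrite opprB q01 //.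
Qed.
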